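(* Let $h$ be a hospital whose utility is proportional to total wage, i.e. $f_h(Y)=\gamma_h\,w_h(Y)$ for all $Y\subseteq X_h$ for some constant $\gamma_h>0$. Define $\mathrm{Ch}_h:2^{X_h}\to2^{X_h}$ as follows: given $X'\subseteq X_h$ (with $\mathrm{Ch}_h(\emptyset)=\emptyset$), sort $X'$ in non-decreasing order of wage (ties broken by a fixed order) as $x^{(1)},\dots,x^{(|X'|)}$; start with $Y=\emptyset$ and for $i=1,\dots,|X'|-1$ add $x^{(i)}$ to $Y$ if $w_h(Y\cup\{x^{(i)}\})<B_h$; finally add $x^{(|X'|)}$ (a highest-wage contract) to $Y$ and return $Y$. Then $\mathrm{Ch}_h$ satisfies SUB, IRC, LAD and COM.
   Context: Hospital $h$ has a finite set $X_h$ of contracts $x$ with wages $x_W$, $0<x_W\le B_h$, where $B_h>0$ is its budget. $w_h(Y)=\sum_{x\in Y}x_W$ for $Y\subseteq X_h$. For $\mathrm{Ch}_h$ with $\mathrm{Ch}_h(Y)\subseteq Y$: SUB means for all $Y''\subseteq Y'\subseteq X_h$, $Y''\setminus\mathrm{Ch}_h(Y'')\subseteq Y'\setminus\mathrm{Ch}_h(Y')$; IRC means for $Y'\subseteq X_h$, $Y''\subseteq X_h\setminus Y'$, if $\mathrm{Ch}_h(Y'\cup Y'')\subseteq Y'$ then $\mathrm{Ch}_h(Y')=\mathrm{Ch}_h(Y'\cup Y'')$; LAD means for all $Y''\subseteq Y'\subseteq X_h$, $|\mathrm{Ch}_h(Y'')|\le|\mathrm{Ch}_h(Y')|$; COM means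 for all $Y''\subseteq Y'\subseteq X_h$ with $w_h(Y'')\le\max\{B_h,w_h(\mathrm{Ch}_h(Y'))\}$, $f_h(\mathrm{Ch}_h(Y'))\ge f_h(Y'')$. *)

(* Defs.v *)
From HB Require Import structures.
From mathcomp Require Import all_boot all_order all_algebra.
Set Implicit Arguments. Unset Strict Implicit. Unset Printing Implicit Defensive.
Import Order.TTheory GRing.Theory Num.Theory.
Local Open Scope ring_scope.

(* Contracts of hospital h: the finite type T (X_h = [set: T]).
   Wages w : T -> R, budget B. *)

Definition wsum (T : finType) (R : numDomainType) (w : T -> R) (Y : {set T}) : R :=
  \sum_(x in Y) w x.

(* Order "non-decreasing wage, ties broken by the fixed order given by the
   injective rank r" *)
Definition wage_le (T : finType) (R : numDomainType) (w : T -> R) (r : T -> nat)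
  (x y : T) : bool :=
  (w x < w y) || ((w x == w y) && (r x <= r y)%N).

Definition greedy_step (T : finType) (R : numDomainType) (w : T -> R) (B : R)
  (Y : {set T}) (x : T) : {set T} :=
  if wsum w (x |: Y) < B then x |: Y else Y.

Definition Ch_greedy (T : finType) (R : numDomainType) (w : T -> R) (B : R)
  (r : T -> nat) (X' : {set T}) : {set T} :=
  match sort (wage_le w r) (enum X') with
  | [::] => set0
  | x0 :: s' => (last x0 s') |: foldl (greedy_step w B) set0 (belast x0 s')
  end.

Definition SUB (T : finType) (Ch : {set T} -> {set T}) : Prop :=
  forall Y'' Y' : {set T}, Y'' \subset Y' -> Y'' :\: Ch Y'' \subset Y' :\: Ch Y'.

Definition IRC (T : finType) (Ch : {set T} -> {set T}) : Prop :=
  forall Y' Y'' : {set T}, [disjoint Y'' & Y'] ->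
    Ch (Y' :|: Y'') \subset Y' -> Ch Y' = Ch (Y' :|: Y'').

Definition LAD (T : finType) (Ch : {set T} -> {set T}) : Prop :=
  forall Y'' Y' : {set T}, Y'' \subset Y' -> (#|Ch Y''| <= #|Ch Y'|)%N.

Definition COM (T : finType) (R : realDomainType) (w : T -> R) (B : R)
  (f : {set T} -> R) (Ch : {set T} -> {set T}) : Prop :=
  forall Y'' Y' : {set T}, Y'' \subset Y' ->
    wsum w Y'' <= Num.max B (wsum w (Ch Y')) -> f Y'' <= f (Ch Y').

(* Main.v *)
Require Import Defs.
From HB Require Import structures.
From mathcomp Require Import all_boot all_order all_algebra.
Import Order.TTheory GRing.Theory Num.Theory.
Local Open Scope ring_scope.
Set Implicit Arguments. Unset Strict Implicit.

Lemma wle_refl (T : finType) (R : realDomainType) (w : T -> R) r x : wage_le w r x x.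
Proof. by rewrite /wage_le eqxx leqnn orbT. Qed.

Lemma wle_total (T : finType) (R : realDomainType) (w : T -> R) r : total (wage_le w r).
Proof.
move=> x y; rewrite /wage_le.
case: (ltgtP (w x) (w y)) => h //=; exact: leq_total.
Qed.

Lemma wle_trans (T : finType) (R : realDomainType) (w : T -> R) r : transitive (wage_le w r).
Proof.
move=> y x z; rewrite /wage_le => /orP[h1|/andP[/eqP e1 h1]] /orP[h2|/andP[/eqP e2 h2]].
- by rewrite (lt_trans h1 h2).
- by rewrite -e2 h1.
- by rewrite e1 h2.
- by rewrite e1 e2 eqxx (leq_trans h1 h2) orbT.
Qed.

Lemma wle_anti (T : finType) (R : realDomainType) (w : T -> R) r :
  injective r -> forall x y, wage_le w r x y -> wage_le w r y x -> x = y.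
Proof.
move=> hr x y; rewrite /wage_le => /orP[h1|/andP[/eqP e1 h1]] /orP[h2|/andP[/eqP e2 h2]].
- by move: (lt_trans h1 h2); rewrite ltxx.
- by move: h1; rewrite e2 ltxx.
- by move: h2; rewrite e1 ltxx.
- by apply: hr; apply/eqP; rewrite eqn_leq h1 h2.
Qed.

Lemma wle_w (T : finType) (R : realDomainType) (w : T -> R) r x y :
  wage_le w r x y -> w x <= w y.
Proof. by rewrite /wage_le => /orP[/ltW|/andP[/eqP -> _]]. Qed.

Lemma ex_min_seq (T : eqType) (e : rel T) : total e -> transitive e ->
  forall s : seq T, s != [::] -> exists2 z, z \in s & forall y, y \in s -> e z y.
Proof.
move=> tot tr; elim=> [//|a s IH] _.
case: s IH => [|b s] IH.
  exists a; first by rewrite inE. by move=> y; rewrite inE => /eqP ->; case/orP: (tot a a).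
have [z zin zmin] := IH isT.
case/orP: (tot a z) => h.
- exists a; first by rewrite inE eqxx.
  move=> y; rewrite inE => /orP[/eqP ->|/zmin]; last exact: tr.
  by case/orP: (tot a a).
- exists z; first by rewrite inE zin orbT.
  by move=> y; rewrite inE => /orP[/eqP ->|/zmin].
Qed.

Lemma ex_min_set (T : finType) (R : realDomainType) (w : T -> R) r (S : {set T}) :
  S != set0 -> exists2 z, z \in S & forall y, y \in S -> wage_le w r z y.
Proof.
move=> hS.
have : enum S != [::].
  apply/eqP => e; move/set0Pn: hS => [x xS]; by move: (mem_enum S x); rewrite e xS.
case/(@ex_min_seq _ _ (@wle_total _ _ w r) (@wle_trans _ _ w r)) => z.
rewrite mem_enum => zS hz; exists z => // y yS; apply: hz; by rewrite mem_enum.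
Qed.

Lemma ex_max_set (T : finType) (R : realDomainType) (w : T -> R) r (S : {set T}) :
  S != set0 -> exists2 z, z \in S & forall y, y \in S -> wage_le w r y z.
Proof.
move=> hS.
have : enum S != [::].
  apply/eqP => e; move/set0Pn: hS => [x xS]; by move: (mem_enum S x); rewrite e xS.
have tot : total (fun x y => wage_le w r y x) by move=> x y; exact: wle_total.
have tr : transitive (fun x y => wage_le w r y x) by move=> x y z h1 h2; exact: wle_trans h2 h1.
case/(@ex_min_seq _ _ tot tr) => z.
rewrite mem_enum => zS hz; exists z => // y yS; apply: hz; by rewrite mem_enum.
Qed.

Lemma wsum_sub (T : finType) (R : realDomainType) (w : T -> R) (A B : {set T}) :
  (forall x, 0 <= w x) -> A \subset B -> wsum w A <= wsum w B.
Proof.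
move=> hw sAB; rewrite /wsum [X in _ <= X](big_setID A) /= (setIidPr sAB) lerDl.
by apply: sumr_ge0.
Qed.

Lemma wsumU1 (T : finType) (R : realDomainType) (w : T -> R) z (A : {set T}) :
  z \notin A -> wsum w (z |: A) = w z + wsum w A.
Proof. by move=> h; rewrite /wsum big_setU1. Qed.

Lemma wsum_lb (T : finType) (R : realDomainType) (w : T -> R) (S : {set T}) c :
  (forall x, x \in S -> c <= w x) -> c *+ #|S| <= wsum w S.
Proof. by move=> h; rewrite /wsum -sumr_const; apply: ler_sum. Qed.

Lemma wsum_ub (T : finType) (R : realDomainType) (w : T -> R) (S : {set T}) c :
  (forall x, x \in S -> w x <= c) -> wsum w S <= c *+ #|S|.
Proof. by move=> h; rewrite /wsum -sumr_const; apply: ler_sum. Qed.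
Definition pre (T : finType) (R : realDomainType) (w : T -> R) r (S : {set T}) x :=
  [set y in S | wage_le w r y x].
Definition acc (T : finType) (R : realDomainType) (w : T -> R) r B (S : {set T}) :=
  [set y in S | wsum w (pre w r S y) < B].
Definition chset (T : finType) (R : realDomainType) (w : T -> R) r B (S : {set T}) :=
  [set x in S | (pre w r S x == S) || (wsum w (pre w r S x) < B)].

Lemma accE (T : finType) (R : realDomainType) (w : T -> R) r B (S : {set T}) y :
  (y \in acc w r B S) = (y \in S) && (wsum w (pre w r S y) < B).
Proof. by rewrite inE. Qed.

Lemma preE (T : finType) (R : realDomainType) (w : T -> R) r (S : {set T}) x y :
  (y \in pre w r S x) = (y \in S) && wage_le w r y x.
Proof. by rewrite inE. Qed.

Lemma pre_sub (T : finType) (R : realDomainType) (w : T -> R) r (S : {set T}) x :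
  pre w r S x \subset S.
Proof. by apply/subsetP => y; rewrite preE => /andP[]. Qed.

Lemma acc_sub (T : finType) (R : realDomainType) (w : T -> R) r B (S : {set T}) :
  acc w r B S \subset S.
Proof. by apply/subsetP => y; rewrite accE => /andP[]. Qed.

Lemma KL (T : finType) (R : realDomainType) (w : T -> R) r B (S : {set T}) z :
  injective r ->
  (forall y, y \in S :\: acc w r B S -> wage_le w r z y) ->
  pre w r S z \subset z |: acc w r B S.
Proof.
move=> hr hmin; apply/subsetP => y; rewrite preE => /andP[yS le_yz].
rewrite in_setU1; case: (boolP (y \in acc w r B S)); first by rewrite orbT.
move=> yna; have := hmin y; rewrite in_setD yna yS => /(_ isT) h.
by rewrite (wle_anti hr le_yz h) eqxx.
Qed.

Lemma exists_outside (T : finType) (A S : {set T}) :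
  A \subset S -> A != S -> S :\: A != set0.
Proof.
move=> sAS neq; apply/negP; rewrite setD_eq0 => sSA; move/negP: neq; apply.
by rewrite eqEsubset sAS sSA.
Qed.

Lemma foldl_acc (T : finType) (R : realDomainType) (w : T -> R) r B :
  (forall x, 0 < w x) -> injective r ->
  forall p, pairwise (wage_le w r) p -> uniq p ->
  foldl (greedy_step w B) set0 p = acc w r B [set y in p].
Proof.
move=> hw hr; have hw0 : forall x, 0 <= w x by move=> x; exact: ltW.
elim/last_ind => [|p x IH].
  by move=> _ _; apply/setP => y; rewrite accE !inE.
rewrite pairwise_rcons rcons_uniq => /andP[hall hp] /andP[xnp up].
rewrite foldl_rcons IH //.
set S := [set y in p].
have xnS : x \notin S by rewrite inE.
have eS : [set y in rcons p x] = x |: S.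
  by apply/setP => y; rewrite !inE mem_rcons inE.
have hallS : forall y, y \in S -> wage_le w r y x.
  by move=> y; rewrite inE => yp; exact: (allP hall).
have preS : forall y, y \in S -> pre w r (x |: S) y = pre w r S y.
  move=> y yS; apply/setP => t; rewrite !preE in_setU1.
  case: (eqVneq t x) => [->|] //=.
  rewrite (negbTE xnS) /=; apply/negP => lxy; have := wle_anti hr lxy (hallS y yS) => exy.
  by move: yS; rewrite -exy (negbTE xnS).
have prex : pre w r (x |: S) x = x |: S.
  apply/setP => t; rewrite preE in_setU1.
  case: (eqVneq t x) => [->|] /=; first by rewrite wle_refl.
  by move=> _; case: (boolP (t \in S)) => //= tS; exact: hallS.
have FS : acc w r B S \subset S := acc_sub _ _ _ _.
have FSi : forall y, y \in acc w r B S -> y \in S.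
  by move=> y; rewrite accE => /andP[].
have key : (wsum w (x |: acc w r B S) < B) = (wsum w (x |: S) < B).
  case: (eqVneq (acc w r B S) S) => [->//|ne].
  have [z zin zmin] := ex_min_set w r (exists_outside FS ne).
  have hk := KL hr zmin.
  move: zin; rewrite in_setD accE => /andP[zna zS]; rewrite zS /= in zna.
  rewrite -leNgt in zna.
  have xna : x \notin acc w r B S by apply/negP => /FSi; rewrite (negbTE xnS).
  have zna' : z \notin acc w r B S by rewrite accE zS /= -leNgt.
  rewrite !ltNge; congr negb.
  apply/idP/idP => _.
  - apply: (le_trans zna); apply: wsum_sub => //.
    apply: (subset_trans (pre_sub _ _ _ _)); exact: subsetUr.
  - apply: (le_trans zna); apply: (le_trans (wsum_sub hw0 hk)).
    rewrite !wsumU1 // lerD2r; apply: wle_w; exact: hallS.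
rewrite /greedy_step key eS; apply/setP => y; rewrite accE.
case: (eqVneq y x) => [->|nyx].
  rewrite prex setU11 /=; case: ifP => //= _; rewrite ?setU11 //.
  by apply/negbTE/negP => xa; move: (FSi x xa); rewrite (negbTE xnS).
rewrite in_setU1 (negbTE nyx) /=.
have -> : (y \in (if wsum w (x |: S) < B then x |: acc w r B S else acc w r B S)) = (y \in acc w r B S).
  by case: ifP => _ //; rewrite in_setU1 (negbTE nyx).
rewrite accE; case: (boolP (y \in S)) => //= yS; by rewrite preS.
Qed.

Lemma Ch_char (T : finType) (R : realDomainType) (w : T -> R) r B :
  (forall x, 0 < w x) -> injective r ->
  forall X, Ch_greedy w B r X = chset w r B X.
Proof.
move=> hw hr X; rewrite /Ch_greedy.
have tot := @wle_total T R w r. have tr := @wle_trans T R w r.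
have ss : sorted (wage_le w r) (sort (wage_le w r) (enum X)) := sort_sorted tot _.
have us : uniq (sort (wage_le w r) (enum X)) by rewrite sort_uniq enum_uniq.
have ms : forall y, (y \in sort (wage_le w r) (enum X)) = (y \in X).
  by move=> y; rewrite mem_sort mem_enum.
move: ss us ms; case: (sort _ _) => [|x0 s'] ss us ms.
  apply/setP => y; rewrite !inE.
  by have -> : (y \in X) = false by rewrite -ms.
set p := belast x0 s'; set m := last x0 s'.
rewrite lastI -/p -/m in ss us ms.
rewrite (sorted_pairwise tr) pairwise_rcons in ss; case/andP: ss => hall hp.
rewrite rcons_uniq in us; case/andP: us => mnp up.
rewrite (foldl_acc (r:=r)) //.
set S := [set y in p].
have xnS : m \notin S by rewrite inE.
have eX : X = m |: S.
  by apply/setP => y; rewrite -ms mem_rcons !inE.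
have hallS : forall y, y \in S -> wage_le w r y m.
  by move=> y; rewrite inE => yp; exact: (allP hall).
have preS : forall y, y \in S -> pre w r (m |: S) y = pre w r S y.
  move=> y yS; apply/setP => t; rewrite !preE in_setU1.
  case: (eqVneq t m) => [->|] //=.
  rewrite (negbTE xnS) /=; apply/negP => lxy; have := wle_anti hr lxy (hallS y yS) => exy.
  by move: yS; rewrite -exy (negbTE xnS).
have prex : pre w r (m |: S) m = m |: S.
  apply/setP => t; rewrite preE in_setU1.
  case: (eqVneq t m) => [->|] /=; first by rewrite wle_refl.
  by move=> _; case: (boolP (t \in S)) => //= tS; exact: hallS.
rewrite eX; apply/setP => y; rewrite in_setU1 accE [in RHS]inE in_setU1.
case: (eqVneq y m) => [->|nym] /=; first by rewrite prex eqxx.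
case: (boolP (y \in S)) => //= yS; rewrite preS //.
have -> : (pre w r S y == m |: S) = false.
  apply/negP => /eqP e; have : m \in pre w r S y by rewrite e setU11.
  by rewrite preE (negbTE xnS).
by [].
Qed.

Lemma chsetE (T : finType) (R : realDomainType) (w : T -> R) r B (S : {set T}) x :
  (x \in chset w r B S) = (x \in S) && ((pre w r S x == S) || (wsum w (pre w r S x) < B)).
Proof. by rewrite inE. Qed.

Lemma ch_sub (T : finType) (R : realDomainType) (w : T -> R) r B (S : {set T}) :
  chset w r B S \subset S.
Proof. by apply/subsetP => y; rewrite chsetE => /andP[]. Qed.

Lemma acc_ch (T : finType) (R : realDomainType) (w : T -> R) r B (S : {set T}) :
  acc w r B S \subset chset w r B S.
Proof. by apply/subsetP => y; rewrite chsetE accE => /andP[-> ->]; rewrite orbT. Qed.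

Lemma ch0 (T : finType) (R : realDomainType) (w : T -> R) r B :
  chset w r B set0 = set0.
Proof. by apply/setP => y; rewrite chsetE in_set0. Qed.

Lemma pre_mono (T : finType) (R : realDomainType) (w : T -> R) r (S1 S2 : {set T}) x :
  S1 \subset S2 -> pre w r S1 x \subset pre w r S2 x.
Proof.
move=> s; apply/subsetP => y; rewrite !preE => /andP[h ->]; by rewrite (subsetP s _ h).
Qed.

Lemma pre_max (T : finType) (R : realDomainType) (w : T -> R) r (S : {set T}) m :
  (forall y, y \in S -> wage_le w r y m) -> pre w r S m = S.
Proof.
move=> h; apply/setP => y; rewrite preE; case: (boolP (y \in S)) => //= yS; exact: h.
Qed.

Lemma pre_eq_le (T : finType) (R : realDomainType) (w : T -> R) r (S : {set T}) x y :
  pre w r S x = S -> y \in S -> wage_le w r y x.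
Proof. by move=> e yS; move: yS; rewrite -{1}e preE => /andP[]. Qed.

Lemma max_nacc (T : finType) (R : realDomainType) (w : T -> R) r B (Y : {set T}) m :
  (forall x, 0 <= w x) ->
  (forall y, y \in Y -> wage_le w r y m) -> Y :\: acc w r B Y != set0 ->
  m \notin acc w r B Y.
Proof.
move=> hw0 hm ne; apply/negP; rewrite accE pre_max // => /andP[_ hlt].
case/set0Pn: ne => x; rewrite in_setD accE => /andP[/negP hn xY]; apply: hn.
rewrite xY /=; apply: le_lt_trans hlt; apply: wsum_sub => //; exact: pre_sub.
Qed.

Lemma gapL (T : finType) (R : realDomainType) (w : T -> R) r B (Y : {set T}) z :
  (forall x, 0 <= w x) -> injective r ->
  z \in Y :\: acc w r B Y ->
  (forall y, y \in Y :\: acc w r B Y -> wage_le w r z y) ->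
  B <= w z + wsum w (acc w r B Y).
Proof.
move=> hw0 hr; rewrite in_setD => /andP[zna zY] hmin.
have hk := KL hr hmin.
have hB : B <= wsum w (pre w r Y z) by move: zna; rewrite accE zY /= -leNgt.
apply: (le_trans hB); rewrite -wsumU1 //; exact: wsum_sub.
Qed.

Lemma SUB_ch (T : finType) (R : realDomainType) (w : T -> R) r B :
  (forall x, 0 <= w x) -> SUB (chset w r B).
Proof.
move=> hw0 Y2 Y1 sub; apply/subsetP => x; rewrite !in_setD !chsetE => /andP[hn xY2].
have xY1 := subsetP sub _ xY2.
rewrite xY1 andbT /=; rewrite xY2 /= negb_or in hn; case/andP: hn => hne hlt.
rewrite negb_or; apply/andP; split.
- apply/negP => /eqP e; move/negP: hne; apply; apply/eqP/setP => y; rewrite preE.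
  case: (boolP (y \in Y2)) => //= yY2; apply: (pre_eq_le e); exact: (subsetP sub).
- rewrite -leNgt in hlt; rewrite -leNgt; apply: (le_trans hlt); apply: wsum_sub => //; exact: pre_mono.
Qed.

Lemma COM_ch (T : finType) (R : realDomainType) (w : T -> R) r B gamma :
  (forall x, 0 < w x) -> injective r -> 0 < gamma ->
  COM w B (fun Y => gamma * wsum w Y) (chset w r B).
Proof.
move=> hw hr hg; have hw0 : forall x, 0 <= w x by move=> x; exact: ltW.
move=> Y2 Y1 sub hle; rewrite (ler_pM2l hg).
case: (eqVneq (chset w r B Y1) Y1) => [e|ne].
  by rewrite e; apply: wsum_sub.
suff hB : B <= wsum w (chset w r B Y1) by rewrite max_r in hle.
case: (eqVneq Y1 set0) => [e0|n0]; first by move: ne; rewrite e0 ch0 eqxx.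
have [m mY hm] := ex_max_set w r n0.
have nacc : Y1 :\: acc w r B Y1 != set0.
  apply/negP => /eqP e; move/negP: ne; apply; apply/eqP; apply/eqP; rewrite eqEsubset ch_sub /=.
  apply: (subset_trans _ (acc_ch _ _ _ _)); by rewrite -setD_eq0 e.
have mna := max_nacc hw0 hm nacc.
have [z zin zmin] := ex_min_set w r nacc.
have hgap := gapL hw0 hr zin zmin.
apply: (le_trans hgap).
have mch : m |: acc w r B Y1 \subset chset w r B Y1.
  rewrite subUset acc_ch andbT sub1set chsetE mY /= pre_max //; by rewrite eqxx.
apply: le_trans (wsum_sub hw0 mch); rewrite wsumU1 // lerD2r.
apply: wle_w; apply: hm; move: zin; rewrite in_setD => /andP[].
by [].
Qed.

Lemma IRC_ch (T : finType) (R : realDomainType) (w : T -> R) r B :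
  (forall x, 0 < w x) -> injective r -> IRC (chset w r B).
Proof.
move=> hw hr; have hw0 : forall x, 0 <= w x by move=> x; exact: ltW.
move=> Y1 Y2 dis hsub; set U := Y1 :|: Y2.
have s1U : Y1 \subset U by exact: subsetUl.
case: (eqVneq U set0) => [U0|Un0].
  have e : Y1 = U by apply/eqP; rewrite eqEsubset s1U U0 sub0set.
  by rewrite -e.
have [m mU hm] := ex_max_set w r Un0.
have hdis : forall y, y \in Y2 -> y \notin Y1.
  by move=> y yY2; apply/negP => yY1; move/pred0P: dis => /(_ y); rewrite /= yY2 yY1.
have chY1 : forall y, y \in chset w r B U -> y \in Y1 by move=> y; apply: (subsetP hsub).
have mY1 : m \in Y1 by apply: chY1; rewrite chsetE mU pre_max // eqxx.
apply/setP => x; rewrite !chsetE.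
case: (boolP (x \in Y1)) => xY1 /=; last first.
  apply/esym/negbTE/negP => /andP[xU h]; move/negP: xY1; apply; apply: chY1.
  by rewrite chsetE xU h.
have xU : x \in U by exact: (subsetP s1U).
rewrite xU /=; apply/idP/idP.
- case/orP => [/eqP e | hlt].
    have lmx : wage_le w r m x by exact: (pre_eq_le e).
    apply/orP; left; apply/eqP; apply: pre_max => y yU; exact: wle_trans (hm y yU) lmx.
  apply/negPn/negP; rewrite negb_or => /andP[hne hge]; rewrite -leNgt in hge.
  have ne : pre w r U x :\: Y1 != set0.
    apply/negP; rewrite setD_eq0 => sub1.
    have : pre w r U x \subset pre w r Y1 x.
      apply/subsetP => y yp; rewrite preE (subsetP sub1 _ yp) /=.
      by move: yp; rewrite preE => /andP[].
    move/(wsum_sub hw0) => h; move: (le_lt_trans (le_trans hge h) hlt); by rewrite ltxx.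
  have [z zin zmin] := ex_min_set w r ne.
  move: zin; rewrite in_setD preE => /andP[zn1 /andP[zU lzx]].
  have znc : z \notin chset w r B U by apply/negP => /chY1; rewrite (negbTE zn1).
  have hB : B <= wsum w (pre w r U z).
    by move: znc; rewrite chsetE zU /= negb_or => /andP[_]; rewrite -leNgt.
  have xz : z != x by apply/negP => /eqP ezx; move: zn1; rewrite ezx xY1.
  have xin : x \in pre w r Y1 x by rewrite preE xY1 wle_refl.
  have sp : pre w r U z \subset z |: (pre w r Y1 x :\ x).
    apply/subsetP => y; rewrite preE => /andP[yU lyz]; rewrite in_setU1.
    case: (eqVneq y z) => //= nyz.
    have lyx := wle_trans lyz lzx.
    case: (boolP (y \in Y1)) => yY1; last first.
      have : wage_le w r z y by apply: zmin; rewrite in_setD yY1 preE yU lyx.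
      by move=> lzy; move: nyz; rewrite (wle_anti hr lyz lzy) eqxx.
    rewrite in_setD1 preE yY1 lyx !andbT.
    apply/negP => /eqP eyx; subst y; rename lyz into lxz.
    by move: xz; rewrite (wle_anti hr lzx lxz) eqxx.
  have := le_trans hB (wsum_sub hw0 sp).
  have zn : z \notin pre w r Y1 x :\ x by rewrite in_setD1 preE (negbTE zn1) !andbF.
  rewrite wsumU1 // => h2.
  have h3 : w z + wsum w (pre w r Y1 x :\ x) <= wsum w (pre w r Y1 x).
    rewrite -[in X in _ <= X](setD1K xin) wsumU1 ?in_setD1 ?eqxx // lerD2r; exact: (wle_w lzx).
  by move: (le_lt_trans (le_trans h2 h3) hlt); rewrite ltxx.
- case/orP => [/eqP e | hlt].
    apply/orP; left; apply/eqP/setP => y; rewrite preE.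
    case: (boolP (y \in Y1)) => //= yY1; apply: (pre_eq_le e); exact: (subsetP s1U).
  apply/orP; right; apply: le_lt_trans hlt; apply: wsum_sub => //; exact: pre_mono.
Qed.

Lemma LAD_ch (T : finType) (R : realDomainType) (w : T -> R) r B :
  (forall x, 0 < w x) -> injective r -> LAD (chset w r B).
Proof.
move=> hw hr; have hw0 : forall x, 0 <= w x by move=> x; exact: ltW.
move=> Y2 Y1 sub.
case: (eqVneq Y2 set0) => [->|n2]; first by rewrite ch0 cards0.
have n1 : Y1 != set0.
  case/set0Pn: n2 => y yY2; apply/set0Pn; exists y; exact: (subsetP sub).
have [m1 m1Y hm1] := ex_max_set w r n1.
have [m2 m2Y hm2] := ex_max_set w r n2.
set A1 := acc w r B Y1; set A2 := acc w r B Y2.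
have c2 : chset w r B Y2 \subset m2 |: A2.
  apply/subsetP => x; rewrite chsetE in_setU1 accE => /andP[xY /orP[/eqP e|->]].
    by rewrite (wle_anti hr (hm2 x xY) (pre_eq_le e m2Y)) eqxx.
  by rewrite xY orbT.
have k2 : (#|chset w r B Y2| <= (#|A2|).+1)%N.
  apply: (leq_trans (subset_leq_card c2)); rewrite cardsU1; by case: (m2 \notin A2).
have k2' : (#|chset w r B Y2| <= #|Y1|)%N.
  apply: (leq_trans (subset_leq_card (ch_sub _ _ _ _))); exact: subset_leq_card.
case: (eqVneq A1 Y1) => [e|ne].
  have -> : chset w r B Y1 = Y1.
    apply/eqP; rewrite eqEsubset ch_sub /= -{1}e; exact: acc_ch.
  exact: k2'.
have nacc : Y1 :\: A1 != set0 by apply: exists_outside => //; exact: acc_sub.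
have mna := max_nacc hw0 hm1 nacc.
have k1 : ((#|A1|).+1 <= #|chset w r B Y1|)%N.
  have : m1 |: A1 \subset chset w r B Y1.
    rewrite subUset acc_ch andbT sub1set chsetE m1Y /= pre_max //; by rewrite eqxx.
  move/subset_leq_card; by rewrite cardsU1 mna.
apply: (leq_trans k2); apply: leq_trans k1; rewrite ltnS.
rewrite leqNgt; apply/negP => hlt.
have [z zin zmin] := ex_min_set w r nacc.
have hgap := gapL hw0 hr zin zmin.
move: (zin); rewrite in_setD => /andP[zna zY1].
have hA1 : forall y, y \in A1 -> w y <= w z.
  move=> y yA; apply: wle_w; case/orP: (wle_total w r y z) => [h|lzy]; first exact: h.
  move/negP: zna; case; rewrite accE zY1 /=.
  apply: le_lt_trans (_ : wsum w (pre w r Y1 y) < B); last by move: yA; rewrite accE => /andP[].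
  apply: wsum_sub => //; apply/subsetP => t; rewrite !preE => /andP[-> ltz] /=.
  exact: wle_trans ltz lzy.
have hA2 : forall y, y \in A2 :\: A1 -> w z <= w y.
  move=> y; rewrite in_setD => /andP[ynA1 yA2]; apply: wle_w; apply: zmin.
  rewrite in_setD ynA1 /=; move: yA2; rewrite accE => /andP[yY2 _]; exact: (subsetP sub _ yY2).
have nA2 : A2 != set0 by apply/negP => /eqP e; move: hlt; rewrite e cards0.
have [a aA2 ha] := ex_max_set w r nA2.
have sA2 : wsum w A2 < B.
  apply: le_lt_trans (_ : wsum w (pre w r Y2 a) < B); last by move: aA2; rewrite accE => /andP[].
  apply: wsum_sub => //; apply/subsetP => t tA; rewrite preE ha // andbT.
  by move: tA; rewrite accE => /andP[].
have e1 : wsum w A1 = wsum w (A1 :&: A2) + wsum w (A1 :\: A2) by rewrite /wsum (big_setID A2).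
have e2 : wsum w A2 = wsum w (A1 :&: A2) + wsum w (A2 :\: A1) by rewrite /wsum (big_setID A1) setIC.
have cd : ((#|A1 :\: A2|).+1 <= #|A2 :\: A1|)%N.
  have h1 := cardsID A2 A1; have h2 := cardsID A1 A2; rewrite setIC in h2.
  by move: hlt; rewrite -h1 -h2 ltn_add2l.
have u1 : wsum w (A1 :\: A2) <= w z *+ #|A1 :\: A2|.
  apply: wsum_ub => y; rewrite in_setD => /andP[_]; exact: hA1.
have u2 : w z *+ #|A2 :\: A1| <= wsum w (A2 :\: A1) by apply: wsum_lb.
have u3 : w z *+ (#|A1 :\: A2|).+1 <= w z *+ #|A2 :\: A1| by apply: ler_wpMn2l.
have : B < B.
  apply: (le_lt_trans hgap); apply: le_lt_trans sA2.
  rewrite e1 e2 addrCA lerD2l; apply: le_trans u2; apply: le_trans u3.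
  by rewrite mulrS lerD2l.
by rewrite ltxx.
Qed.

Theorem lemma5 (T : finType) (R : realFieldType) (w : T -> R) (B gamma : R)
  (r : T -> nat) :
  0 < B ->
  (forall x : T, 0 < w x <= B) ->
  injective r ->
  0 < gamma ->
  let f := fun Y : {set T} => gamma * wsum w Y in
  let Ch := Ch_greedy w B r in
  [/\ SUB Ch, IRC Ch, LAD Ch & COM w B f Ch].
Proof.
move=> hB hwB hr hg f Ch.
have hw : forall x, 0 < w x by move=> x; case/andP: (hwB x).
have hw0 : forall x, 0 <= w x by move=> x; exact: ltW.
have e : forall X, Ch X = chset w r B X by move=> X; rewrite /Ch Ch_char.
split.
- move=> Y2 Y1; rewrite !e; exact: SUB_ch.
- move=> Y1 Y2; rewrite !e; exact: IRC_ch.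
- move=> Y2 Y1; rewrite !e; exact: LAD_ch.
- move=> Y2 Y1; rewrite !e; exact: COM_ch.
Qed.
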